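(* Let $\mu$ be a Borel measure on $\mathbb{R}^n$ with $0<\mu(Q)<\infty$ for all $Q\in\mathcal{D}$. For any $f\in L^1_{\mathrm{loc}}(\mu)$ and any $Q\in\mathcal{D}$, $$\|\Delta_Qf\|_{L^1(\mu)}\le2\int_Q|f|\,d\mu.$$ Moreover, if $b\in\mathrm{BMO}(\mu)$, then for all $x$, $$\big|\mathbb{E}_Q(\Delta_Qb\,\Delta_Qf)(x)\big|\le2\,\|b\|_{\mathrm{BMO}}\,\langle|f|\rangle_Q.$$
   Context: $\mathcal{D}$ is the standard dyadic grid in $\mathbb{R}^n$; $\mathrm{ch}(Q)$ are the $2^n$ dyadic children of $Q$, $\widehat Q$ its parent; $\langle f\rangle_Q=\frac1{\mu(Q)}\int_Qf\,d\mu$, $\mathbb{E}_Qf=\langle f\rangle_Q\mathbf 1_Q$, $\Delta_Qf=\sum_{R\in\mathrm{ch}(Q)}\mathbb{E}_Rf-\mathbb{E}_Qf$. $\|b\|_{\mathrm{BMO}}=\sup_{Q\in\mathcal{D}}\frac1{\mu(Q)}\int_Q|b-\langle b\rangle_{\widehat Q}|\,d\mu$. *)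

(* Defs.v *)
From HB Require Import structures.
From mathcomp Require Import all_boot all_order all_algebra.
From mathcomp Require Import all_classical all_reals all_analysis.
Set Implicit Arguments.
Unset Strict Implicit.
Unset Printing Implicit Defensive.
Import Order.TTheory GRing.Theory Num.Theory.
Import numFieldNormedType.Exports.
Local Open Scope classical_set_scope.
Local Open Scope ring_scope.

(* R^n as row vectors 'rV[R]_n, equipped with its Borel sigma-algebra
   (sigma-algebra generated by the open sets of the usual topology). *)
Definition Rn (R : realType) (n : nat) := g_sigma_algebraType (@open 'rV[R]_n).

Definition dcube (R : realType) (n : nat) (k : int) (m : 'I_n -> int)
  : set (Rn R n) :=
  [set x : 'rV[R]_n | forall i : 'I_n,
      (m i)%:~R * (2%:R ^ (- k)) <= x ord0 i /\
      x ord0 i < (m i + 1)%:~R * (2%:R ^ (- k))].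

Definition dchild (R : realType) (n : nat) (k : int) (m : 'I_n -> int)
  (e : {ffun 'I_n -> bool}) : set (Rn R n) :=
  @dcube R n (k + 1) (fun i => 2 * m i + (e i)%:Z).

Definition dparent (R : realType) (n : nat) (k : int) (m : 'I_n -> int)
  : set (Rn R n) :=
  @dcube R n (k - 1) (fun i => (m i %/ 2)%Z).

Local Open Scope ereal_scope.

Definition avg (R : realType) (n : nat) (mu : {measure set (Rn R n) -> \bar R})
  (Q : set (Rn R n)) (f : Rn R n -> R) : R :=
  (fine (\int[mu]_(x in Q) (f x)%:E) / fine (mu Q))%R.

Definition condE (R : realType) (n : nat) (mu : {measure set (Rn R n) -> \bar R})
  (Q : set (Rn R n)) (f : Rn R n -> R) : Rn R n -> R :=
  fun x => (avg mu Q f * \1_Q x)%R.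

Definition martdiff (R : realType) (n : nat) (mu : {measure set (Rn R n) -> \bar R})
  (k : int) (m : 'I_n -> int) (f : Rn R n -> R) : Rn R n -> R :=
  fun x => (\sum_(e : {ffun 'I_n -> bool}) condE mu (@dchild R n k m e) f x
            - condE mu (@dcube R n k m) f x)%R.

Definition loc_integrable (R : realType) (n : nat)
  (mu : {measure set (Rn R n) -> \bar R}) (f : Rn R n -> R) : Prop :=
  measurable_fun setT f /\
  forall K : set 'rV[R]_n, compact K ->
    \int[mu]_(x in (K : set (Rn R n))) `|f x|%:E < +oo.

Definition bmo_norm (R : realType) (n : nat)
  (mu : {measure set (Rn R n) -> \bar R}) (b : Rn R n -> R) : \bar R :=
  ereal_sup [set ((fine (mu (@dcube R n k m)))^-1)%:E *
                 \int[mu]_(x in @dcube R n k m)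
                    `|b x - avg mu (@dparent R n k m) b|%:E
            | k in [set: int] & m in [set: 'I_n -> int]].

(* Main.v *)
Require Import Defs.
From HB Require Import structures.
From mathcomp Require Import all_boot all_order all_algebra.
From mathcomp Require Import all_classical all_reals all_analysis.
From mathcomp Require Import lra measurable_realfun.
Import Order.TTheory GRing.Theory Num.Theory.
Import numFieldNormedType.Exports.
Local Open Scope classical_set_scope.
Local Open Scope ring_scope.
Set Implicit Arguments. Unset Strict Implicit.

Lemma coord_child (R : realType) (c h x : R) (b : bool) : 0 < h ->
  ((2 * c + b%:R) * h <= x /\ x < (2 * c + b%:R + 1) * h) ->
  (c * (2 * h) <= x /\ x < (c + 1) * (2 * h)) /\ b = ((2 * c + 1) * h <= x).
Proof.
move=> h0; case: b => /= -[H1 H2]; split.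
- split; nra.
- apply/esym/idP; nra.
- split; nra.
- apply/esym/negbTE; rewrite -ltNge; nra.
Qed.

Lemma coord_par (R : realType) (c h x : R) : 0 < h ->
  (c * (2 * h) <= x /\ x < (c + 1) * (2 * h)) ->
  let b := ((2 * c + 1) * h <= x) in
  ((2 * c + b%:R) * h <= x /\ x < (2 * c + b%:R + 1) * h).
Proof.
move=> h0 [H1 H2] b; rewrite /b; case H: ((2 * c + 1) * h <= x) => /=.
 split; nra.
 move/negbT: H; rewrite -ltNge => H; split; nra.
Qed.

Lemma pow_half (R : realType) (k : int) : (2%:R : R) ^ (- k) = 2 * (2%:R ^ (- (k + 1))).
Proof.
rewrite opprD expfzDr ?pnatr_eq0 // exprN1 mulrCA divff ?mulr1 // pnatr_eq0 //.
Qed.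

Section Cubes.
Variables (R : realType) (n : nat).

Definition idx (k : int) (m : 'I_n -> int) (x : 'rV[R]_n) : {ffun 'I_n -> bool} :=
  [ffun i => ((2 * (m i)%:~R + 1) * (2%:R ^ (- (k + 1))) <= x ord0 i)].

Lemma cast_child (c : int) (b : bool) :
  ((2 * c + (b : nat)%:Z)%:~R : R) = 2 * c%:~R + (b : nat)%:R.
Proof. by rewrite intrD intrM. Qed.

Lemma cast_p1 (c : int) : ((c + 1)%:~R : R) = c%:~R + 1.
Proof. by rewrite intrD. Qed.

Lemma child_sub k m e (x : 'rV[R]_n) : @dchild R n k m e x ->
  @dcube R n k m x /\ e = idx k m x.
Proof.
rewrite /dchild /dcube /= => H.
have h0 : 0 < (2%:R : R) ^ (- (k + 1)) by rewrite exprz_gt0.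
have P i := @coord_child R (m i)%:~R _ (x ord0 i) (e i) h0.
split.
- move=> i; have := H i; rewrite cast_p1 cast_child => Hi.
  by rewrite pow_half cast_p1; case: (P i Hi).
- apply/ffunP => i; rewrite ffunE; have := H i; rewrite cast_p1 cast_child => Hi.
  by case: (P i Hi).
Qed.

Lemma cube_child k m (x : 'rV[R]_n) : @dcube R n k m x ->
  @dchild R n k m (idx k m x) x.
Proof.
rewrite /dchild /dcube /= => H i.
have h0 : 0 < (2%:R : R) ^ (- (k + 1)) by rewrite exprz_gt0.
have := H i; rewrite pow_half cast_p1 => Hi.
have := @coord_par _ _ _ _ h0 Hi; rewrite cast_p1 cast_child ffunE; exact.
Qed.

Lemma child_eq k m e e' (x : 'rV[R]_n) : @dchild R n k m e x ->
  @dchild R n k m e' x -> e = e'.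
Proof. by move=> /child_sub[_ ->] /child_sub[_ ->]. Qed.

Lemma parent_child k m (e : {ffun 'I_n -> bool}) : @dparent R n (k + 1) (fun i => 2 * m i + (e i : nat)%:Z) = @dcube R n k m.
Proof.
rewrite /dparent addrK; congr dcube; apply: funext => i.
rewrite mulrC divzMDl //; case: (e i) => /=.
all: by rewrite (_ : (_ %/ 2)%Z = 0) ?addr0.
Qed.
End Cubes.

Lemma bigI_all (T : Type) (I : eqType) (s : seq I) (F : I -> set T) (x : T) :
  (\big[setI/setT]_(i <- s) F i) x <-> (forall i, i \in s -> F i x).
Proof.
elim: s => [|a s IH]; first by rewrite big_nil; split.
rewrite big_cons; split.
- move=> [Fa /IH H] i; rewrite inE => /orP[/eqP ->//|]; exact: H.
- move=> H; split; first by apply: H; rewrite mem_head.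
  by apply/IH => i Hi; apply: H; rewrite inE Hi orbT.
Qed.

Section Meas.
Variables (R : realType) (n : nat).

Lemma meas_open (A : set 'rV[R]_n) : open A -> measurable (A : set (Rn R n)).
Proof. move=> oA. exact: sub_sigma_algebra. Qed.

Lemma open_coord_lt (i : 'I_n) (c : R) : open [set x : 'rV[R]_n | x ord0 i < c].
Proof.
apply: (@open_comp _ _ (fun x : 'rV[R]_n => x ord0 i) [set y | y < c]); last exact: open_lt.
move=> x _; exact: coord_continuous.
Qed.

Lemma open_coord_gt (i : 'I_n) (c : R) : open [set x : 'rV[R]_n | c < x ord0 i].
Proof.
apply: (@open_comp _ _ (fun x : 'rV[R]_n => x ord0 i) [set y | c < y]); last exact: open_gt.
move=> x _; exact: coord_continuous.
Qed.

Lemma meas_box (lo hi : 'I_n -> R) (b : bool) :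
  measurable ([set x : 'rV[R]_n | forall i, lo i <= x ord0 i /\
     (if b then x ord0 i <= hi i else x ord0 i < hi i)] : set (Rn R n)).
Proof.
have -> : [set x : 'rV[R]_n | forall i, lo i <= x ord0 i /\
     (if b then x ord0 i <= hi i else x ord0 i < hi i)] =
  \big[setI/setT]_(i <- enum 'I_n) (~` [set x : 'rV[R]_n | x ord0 i < lo i] `&`
     (if b then ~` [set x : 'rV[R]_n | hi i < x ord0 i] else [set x | x ord0 i < hi i])).
  apply/seteqP; split => x /=.
  - move=> H; apply/bigI_all => i _; have [H1 H2] := H i; split.
      by apply/negP; rewrite -leNgt.
    by destruct b => //=; apply/negP; rewrite -leNgt.
  - move/bigI_all => H i.
    have [/= /negP H1 H2] := H i (mem_enum _ i).
    rewrite -leNgt in H1; split => //.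
    by destruct b => //=; move/negP: H2; rewrite -leNgt.
apply: bigsetI_measurable => i _; apply: measurableI.
  by apply: measurableC; apply: meas_open; exact: open_coord_lt.
case: b; last by apply: meas_open; exact: open_coord_lt.
by apply: measurableC; apply: meas_open; exact: open_coord_gt.
Qed.


Lemma meas_cube k m : measurable (@dcube R n k m).
Proof.
exact: (meas_box (fun i => (m i)%:~R * 2%:R ^ (- k)) (fun i => (m i + 1)%:~R * 2%:R ^ (- k)) false).
Qed.

Lemma meas_child k m e : measurable (@dchild R n k m e).
Proof. exact: meas_cube. Qed.

Local Open Scope ereal_scope.
Lemma cube_fin (mu : {measure set (Rn R n) -> \bar R}) (f : Rn R n -> R) k m :
  loc_integrable mu f -> \int[mu]_(x in @dcube R n k m) `|f x|%:E < +oo.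
Proof.
move=> [mf hK].
pose lo := (fun i => ((m i)%:~R * 2%:R ^ (- k))%R) : 'I_n -> R.
pose hi := (fun i => ((m i + 1)%:~R * 2%:R ^ (- k))%R) : 'I_n -> R.
pose K := [set v : 'rV[R]_n | forall i, `[lo i, hi i]%classic (v ord0 i)].
have cK : compact K.
  by apply: (@rV_compact _ _ (fun i => `[lo i, hi i]%classic)) => i; exact: segment_compact.
have KE : K = [set x : 'rV[R]_n | forall i, (lo i <= x ord0 i)%R /\
     (if true then x ord0 i <= hi i else x ord0 i < hi i)%R].
  apply/seteqP; split => x /= H i; have := H i; rewrite /= ?in_itv /=.
    by move/andP.
  by move=> [-> ->].
have mK : measurable (K : set (Rn R n)) by rewrite KE; exact: (meas_box lo hi true).
apply: le_lt_trans (hK K cK).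
apply: ge0_subset_integral => //.
all: try exact: meas_cube.
- apply/measurable_realfun.measurable_EFinP; apply: measurableT_comp => //.
  exact: measurable_funS mf.
- move=> x /= H i; rewrite /= in_itv /=; have [-> /ltW ->] := H i; by [].
Qed.
End Meas.

Lemma bigU_ex (T : Type) (I : eqType) (s : seq I) (F : I -> set T) (x : T) :
  (\big[setU/set0]_(i <- s) F i) x <-> (exists i, i \in s /\ F i x).
Proof.
elim: s => [|a s IH]; first by rewrite big_nil; split => [//|[i []]].
rewrite big_cons; split.
- move=> [Fa|/IH [i [H1 H2]]]; first by exists a; rewrite mem_head.
  by exists i; rewrite inE H1 orbT.
- move=> [i []]; rewrite inE => /orP[/eqP ->|Hi] Fi; first by left.
  by right; apply/IH; exists i.
Qed.

Lemma fine_abs_le (R : realType) (x : \bar R) (t : R) : (`|x| <= t%:E)%E -> `|fine x| <= t.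
Proof. by case: x => [r||] //=; rewrite lee_fin. Qed.

Section Main.
Variables (R : realType) (n : nat) (mu : {measure set (Rn R n) -> \bar R}).
Local Notation ffb := {ffun 'I_n -> bool}.
Local Notation M A := (fine (mu A)).

Lemma Q_bigU k m : @dcube R n k m = \big[setU/set0]_(e <- enum ffb) @dchild R n k m e.
Proof.
apply/seteqP; split => x.
- move=> Qx; apply/bigU_ex; exists (idx k m x); split; first by rewrite mem_enum.
  exact: cube_child.
- by move/bigU_ex => [e [_ /child_sub []]].
Qed.

Lemma trivI k m : trivIset [set` enum ffb] (@dchild R n k m).
Proof. by move=> i j _ _ [x [Hi Hj]]; exact: child_eq Hi Hj. Qed.

Local Open Scope ereal_scope.

Lemma int_partition k m (g : Rn R n -> \bar R) :
  measurable_fun (@dcube R n k m) g -> (forall x, @dcube R n k m x -> 0 <= g x) ->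
  \int[mu]_(x in @dcube R n k m) g x = \sum_(e <- enum ffb) \int[mu]_(x in @dchild R n k m e) g x.
Proof.
rewrite Q_bigU => mg g0.
apply: ge0_integral_bigsetU => //.
- move=> e; exact: meas_child.
- exact: enum_uniq.
- exact: trivI.
Qed.

Lemma mdiff_in k m (g : Rn R n -> R) e x : @dchild R n k m e x ->
  martdiff mu k m g x = (avg mu (@dchild R n k m e) g - avg mu (@dcube R n k m) g)%R.
Proof.
move=> Px; rewrite /martdiff /condE.
have [Qx _] := child_sub Px.
rewrite (bigD1 e) //= big1 => [|e' /negbTE ne].
  by rewrite !indicE !mem_set // !mulr1 addr0.
rewrite indicE; case: (boolP (x \in _)) => [|_]; last by rewrite mulr0.
by rewrite inE => /(child_eq Px) /eqP; rewrite eq_sym ne.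
Qed.

Lemma mdiff_out k m (g : Rn R n -> R) x : ~ @dcube R n k m x -> martdiff mu k m g x = 0%R.
Proof.
move=> nQ; rewrite /martdiff /condE big1 => [|e _].
  by rewrite indicE memNset // mulr0 subr0.
rewrite indicE memNset ?mulr0 // => /child_sub [].
by [].
Qed.

Lemma meas_mdiff k m (g : Rn R n -> R) : measurable_fun setT (martdiff mu k m g).
Proof.
rewrite /martdiff /condE; apply: measurable_funB => //.
  apply: (@measurable_sum _ _ R setT _ (index_enum ffb)
    (fun e x => (avg mu (@dchild R n k m e) g * \1_(@dchild R n k m e) x)%R)) => e.
  apply: measurable_funM => //.
  apply: measurable_indic; exact: meas_child.
apply: measurable_funM => //; apply: measurable_indic; exact: meas_cube.
Qed.


Definition hmuP := forall (k : int) (m : 'I_n -> int),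
  0 < mu (@dcube R n k m) /\ mu (@dcube R n k m) < +oo.

Lemma muE (hmu : hmuP) k m : mu (@dcube R n k m) = (M (@dcube R n k m))%:E /\ (0 < M (@dcube R n k m))%R.
Proof.
have [h1 h2] := hmu k m.
have fin : mu (@dcube R n k m) \is a fin_num by rewrite ge0_fin_numE // ltW.
by split; [rewrite fineK | rewrite -lte_fin fineK].
Qed.

Lemma int_step (hmu : hmuP) k m (h : Rn R n -> R) (w : ffb -> R) :
  (forall e, 0 <= w e)%R -> measurable_fun setT h ->
  (forall e x, @dchild R n k m e x -> h x = w e) ->
  \int[mu]_(x in @dcube R n k m) (h x)%:E =
    (\sum_(e <- enum ffb) w e * M (@dchild R n k m e))%:E.
Proof.
move=> w0 mh hw.
rewrite int_partition.
- rewrite -sumEFin; apply: eq_bigr => e _.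
  rewrite (eq_integral (cst (w e)%:E)); last first.
    by move=> x; rewrite inE => Px; rewrite /= (hw e x Px).
  rewrite integral_cst; last exact: meas_child.
  by rewrite (proj1 (muE hmu _ _)) -EFinM mulrC.
- apply: measurableT_comp => //; exact: measurable_funS mh.
- move=> x Qx; rewrite lee_fin (hw (idx k m x) x) //; exact: cube_child.
Qed.

Definition Iint (g : Rn R n -> R) (A : set (Rn R n)) := fine (\int[mu]_(x in A) (`|g x|)%:E).
Definition Jint (g : Rn R n -> R) (A : set (Rn R n)) := fine (\int[mu]_(x in A) (g x)%:E).

Lemma fin_int (g : Rn R n -> R) k m : loc_integrable mu g ->
  \int[mu]_(x in @dcube R n k m) (`|g x|)%:E = (Iint g (@dcube R n k m))%:E.
Proof.
move=> hg; rewrite /Iint fineK // ge0_fin_numE; first exact: cube_fin.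
by apply: integral_ge0 => x _; rewrite lee_fin.
Qed.

Lemma absJ (g : Rn R n -> R) k m : loc_integrable mu g ->
  (`|Jint g (@dcube R n k m)| <= Iint g (@dcube R n k m))%R.
Proof.
move=> hg; apply: fine_abs_le; rewrite -fin_int //.
have -> : \int[mu]_(x in @dcube R n k m) (`|g x|)%:E = \int[mu]_(x in @dcube R n k m) `|(g x)%:E|.
  by apply: eq_integral => x _; rewrite abse_EFin.
apply: le_abse_integral; first exact: meas_cube.
apply: measurableT_comp => //; apply: measurable_funS (proj1 hg) => //.
Qed.

Lemma sumM (hmu : hmuP) k m :
  (\sum_(e <- enum ffb) M (@dchild R n k m e) = M (@dcube R n k m))%R.
Proof.
have := @int_step hmu k m (fun _ => 1%R) (fun _ => 1%R) (fun _ => ler01) (measurable_cst _) (fun _ _ _ => erefl).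
have -> : \int[mu]_(x in @dcube R n k m) (1%R)%:E = \int[mu]_(x in @dcube R n k m) (cst 1) x by [].
rewrite integral_cst; last exact: meas_cube.
rewrite mul1e (proj1 (muE hmu _ _)) => -[->].
by apply: eq_bigr => e _; rewrite mul1r.
Qed.

Lemma sumI (g : Rn R n -> R) k m : loc_integrable mu g ->
  (\sum_(e <- enum ffb) Iint g (@dchild R n k m e) = Iint g (@dcube R n k m))%R.
Proof.
move=> hg.
apply: EFin_inj; rewrite -sumEFin -fin_int // int_partition //.
  by apply: eq_bigr => e _; rewrite (@fin_int g (k + 1) _ hg).
apply: measurableT_comp => //; apply: measurableT_comp => //.
apply: measurable_funS (proj1 hg) => //; exact: meas_cube.
Qed.


Definition cf (g : Rn R n -> R) k m e :=
  (avg mu (@dchild R n k m e) g - avg mu (@dcube R n k m) g)%R.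

Lemma avgE (g : Rn R n -> R) A : avg mu A g = (Jint g A / M A)%R.
Proof. by []. Qed.

Lemma part1_real (hmu : hmuP) (g : Rn R n -> R) k m : loc_integrable mu g ->
  (\sum_(e <- enum ffb) `|cf g k m e| * M (@dchild R n k m e) <= 2 * Iint g (@dcube R n k m))%R.
Proof.
move=> hg.
have [_ MQ0] := muE hmu k m.
set MQ := M (@dcube R n k m) in MQ0 *.
set JQ := Jint g (@dcube R n k m).
apply: (@le_trans _ _ (\sum_(e <- enum ffb) (`|Jint g (@dchild R n k m e)| + `|JQ| / MQ * M (@dchild R n k m e)))%R).
  apply: ler_sum => e _.
  have [_ Me0] := muE hmu (k + 1) (fun i => (2 * m i + (e i : nat)%:Z)%R).
  rewrite /cf !avgE.
  apply: le_trans (ler_wpM2r (ltW Me0) (ler_normB _ _)) _.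
  rewrite mulrDl !normrM !normfV (gtr0_norm Me0) (gtr0_norm MQ0) mulfVK ?gt_eqF //.
rewrite big_split /= -mulr_sumr sumM // divfK ?gt_eqF //.
have H1 := absJ k m hg.
have H2 : (\sum_(e <- enum ffb) `|Jint g (@dchild R n k m e)| <= \sum_(e <- enum ffb) Iint g (@dchild R n k m e))%R.
  by apply: ler_sum => e _; exact: (absJ (k + 1) _ hg).
rewrite sumI // in H2.
rewrite -/JQ in H1.
lra.
Qed.

Lemma part1 (hmu : hmuP) (g : Rn R n -> R) k m :
  \int[mu]_x (`|martdiff mu k m g x|)%:E =
    (\sum_(e <- enum ffb) `|cf g k m e| * M (@dchild R n k m e))%:E.
Proof.
rewrite -(@int_step hmu k m (fun x => `|martdiff mu k m g x|%R) (fun e => `|cf g k m e|%R)).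
- rewrite [RHS]integral_mkcond epatch_indic; apply: eq_integral => x _ /=.
  rewrite indicE; case: (boolP (x \in _)) => [_|]; first by rewrite mule1.
  rewrite notin_setE => nQ; by rewrite mdiff_out // normr0 mul0e.
- by move=> e.
- apply: measurableT_comp => //; exact: meas_mdiff.
- by move=> e x Px; rewrite /= (mdiff_in g Px).
Qed.


Lemma bmo_ge0 (b : Rn R n -> R) : 0 <= bmo_norm mu b.
Proof.
apply: le_trans (ereal_sup_ubound _); last first.
  exists 0%R => //; exists (fun _ => 0%R) => //.
apply: mule_ge0; first by rewrite lee_fin invr_ge0 fine_ge0.
by apply: integral_ge0 => x _; rewrite lee_fin.
Qed.

Lemma integrable_cube (b : Rn R n -> R) k m : loc_integrable mu b ->
  mu.-integrable (@dcube R n k m) (EFin \o b).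
Proof.
move=> hb; apply/integrableP; split.
  apply: measurableT_comp => //; apply: measurable_funS (proj1 hb) => //; exact: meas_cube.
have -> : \int[mu]_(x in @dcube R n k m) `|(EFin \o b) x| = \int[mu]_(x in @dcube R n k m) (`|b x|%R)%:E.
  by apply: eq_integral => x _ /=.
exact: cube_fin.
Qed.

Lemma integrable_cst_cube (hmu : hmuP) (a : R) k m :
  mu.-integrable (@dcube R n k m) (EFin \o cst a).
Proof.
apply/integrableP; split.
  by apply: measurableT_comp => //.
have -> : \int[mu]_(x in @dcube R n k m) `|(EFin \o cst a) x| = \int[mu]_(x in @dcube R n k m) (cst (`|a|%R)%:E) x.
  by apply: eq_integral => x _ /=.
rewrite integral_cst; last exact: meas_cube.
by rewrite (proj1 (muE hmu _ _)) -EFinM ltry.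
Qed.

Lemma JE (b : Rn R n -> R) k m : loc_integrable mu b ->
  \int[mu]_(x in @dcube R n k m) (b x)%:E = (Jint b (@dcube R n k m))%:E.
Proof.
move=> hb; rewrite /Jint fineK //.
rewrite -integral_fin_num_abs; last first.
  apply: measurable_funS (proj1 hb) => //; exact: meas_cube.
  exact: meas_cube.
have -> : \int[mu]_(x in @dcube R n k m) `|(b x)%:E| = \int[mu]_(x in @dcube R n k m) (`|b x|%R)%:E.
  by apply: eq_integral => x _ /=.
exact: cube_fin.
Qed.

Lemma bmo_bound (hmu : hmuP) (b : Rn R n -> R) k m e :
  loc_integrable mu b -> bmo_norm mu b < +oo ->
  (`|cf b k m e| <= fine (bmo_norm mu b))%R.
Proof.
move=> hb hB.
set B := fine (bmo_norm mu b).
have BE : bmo_norm mu b = B%:E by rewrite fineK // ge0_fin_numE // bmo_ge0.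
set m' := (fun i => (2 * m i + (e i : nat)%:Z)%R).
have [_ Me0] := muE hmu (k + 1) m'.
set Me := M (@dcube R n (k + 1) m') in Me0 *.
set a := avg mu (@dcube R n k m) b.
set X := \int[mu]_(x in @dcube R n (k + 1) m') (`|b x - a|%R)%:E.
have HX : (Me^-1)%:E * X <= B%:E.
  rewrite -BE; apply: ereal_sup_ubound.
  exists (k + 1)%R => //; exists m' => //.
  by rewrite /Me /X /a -(@parent_child R n k m e).
have X0 : 0 <= X by apply: integral_ge0 => x _; rewrite lee_fin.
have [x XE HxB] : exists2 x, X = x%:E & (x <= Me * B)%R.
  move: HX X0; case: X => [x| |] //.
  - rewrite -EFinM lee_fin => H _; exists x => //.
    have -> : x = (Me * (Me^-1 * x))%R by rewrite mulVKf ?gt_eqF.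
    by rewrite ler_pM2l.
  - by rewrite gt0_muley // lte_fin invr_gt0.
have HI : \int[mu]_(y in @dcube R n (k + 1) m') (b y - a)%:E =
    (Jint b (@dcube R n (k + 1) m') - a * Me)%:E.
  under eq_integral do rewrite EFinB.
  rewrite (@integralB_EFin _ _ _ mu _ b (cst a)); first last.
  - exact: integrable_cst_cube.
  - exact: integrable_cube.
  - exact: meas_cube.
  rewrite JE //.
  have -> : \int[mu]_(x in @dcube R n (k + 1) m') (cst a x)%:E = \int[mu]_(x in @dcube R n (k + 1) m') (cst a%:E) x by [].
  rewrite integral_cst; last exact: meas_cube.
  by rewrite (proj1 (muE hmu _ _)) -EFinM -EFinB.
have Habs : (`|Jint b (@dcube R n (k + 1) m') - a * Me| <= x)%R.
  rewrite -lee_fin -abse_EFin -HI -XE /X.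
  have -> : \int[mu]_(x in @dcube R n (k + 1) m') (`|b x - a|%R)%:E = \int[mu]_(x in @dcube R n (k + 1) m') `|(b x - a)%:E|.
    by apply: eq_integral => y _; rewrite abse_EFin.
  apply: le_abse_integral; first exact: meas_cube.
  apply: measurableT_comp => //; apply: measurable_funB => //.
  apply: measurable_funS (proj1 hb) => //; exact: meas_cube.
rewrite -(@ler_pM2l _ Me) //.
apply: (le_trans _ HxB).
apply: (le_trans _ Habs).
rewrite /cf avgE -/a -{1}(gtr0_norm Me0) -normrM mulrBr [(Me * (_ / _))%R]mulrC divfK ?gt_eqF //.
by rewrite [(Me * a)%R]mulrC.
Qed.


Lemma part2 (hmu : hmuP) (b f : Rn R n -> R) k m (x : Rn R n) :
  loc_integrable mu b -> bmo_norm mu b < +oo -> loc_integrable mu f ->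
  (`|condE mu (@dcube R n k m) (fun y => martdiff mu k m b y * martdiff mu k m f y)%R x|%R)%:E
    <= 2%:E * bmo_norm mu b * (avg mu (@dcube R n k m) (fun y => `|f y|%R))%:E.
Proof.
move=> hb hB hf.
set B := fine (bmo_norm mu b).
have BE : bmo_norm mu b = B%:E by rewrite fineK // ge0_fin_numE // bmo_ge0.
have B0 : (0 <= B)%R by rewrite /B fine_ge0 // bmo_ge0.
have [_ MQ0] := muE hmu k m.
set MQ := M (@dcube R n k m) in MQ0 *.
set h := (fun y => martdiff mu k m b y * martdiff mu k m f y)%R.
have Hint : \int[mu]_(y in @dcube R n k m) (`|h y|%R)%:E =
    (\sum_(e <- enum ffb) `|cf b k m e * cf f k m e|%R * M (@dchild R n k m e))%:E.
  apply: (@int_step hmu k m (fun y => `|h y|%R) (fun e => `|cf b k m e * cf f k m e|%R)) => //.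
  - apply: measurableT_comp => //; apply: measurable_funM; exact: meas_mdiff.
  - by move=> e y Py; rewrite /h (mdiff_in b Py) (mdiff_in f Py).
have HJ : (`|Jint h (@dcube R n k m)| <=
    \sum_(e <- enum ffb) `|cf b k m e * cf f k m e|%R * M (@dchild R n k m e))%R.
  apply: fine_abs_le; rewrite -Hint.
  have -> : \int[mu]_(y in @dcube R n k m) (`|h y|%R)%:E = \int[mu]_(y in @dcube R n k m) `|(h y)%:E| by [].
  apply: le_abse_integral; first exact: meas_cube.
  apply: measurableT_comp => //; apply: measurable_funS (measurable_funM (meas_mdiff k m b) (meas_mdiff k m f)) => //.
have HS : (\sum_(e <- enum ffb) `|cf b k m e * cf f k m e|%R * M (@dchild R n k m e) <=
    B * \sum_(e <- enum ffb) `|cf f k m e| * M (@dchild R n k m e))%R.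
  rewrite mulr_sumr; apply: ler_sum => e _.
  have [_ Me0] := muE hmu (k + 1) (fun i => (2 * m i + (e i : nat)%:Z)%R).
  rewrite normrM mulrA; apply: ler_wpM2r; first exact: ltW.
  apply: ler_wpM2r => //; exact: bmo_bound.
have P1 := part1_real hmu k m hf.
have H1 : (`|Jint h (@dcube R n k m)| <= 2 * B * Iint f (@dcube R n k m))%R.
  apply: le_trans HJ _; apply: le_trans HS _.
  by rewrite [(2 * B)%R]mulrC -mulrA ler_wpM2l.
have H2 : (`|Jint h (@dcube R n k m)| / MQ <= 2 * B * (Iint f (@dcube R n k m) / MQ))%R.
  by rewrite mulrA ler_pM2r ?invr_gt0.
have Hind : (`|\1_(@dcube R n k m) x| <= 1 :> R)%R.
  by rewrite indicE; case: (_ \in _) => /=; rewrite ?normr1 ?normr0.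
rewrite BE -!EFinM lee_fin /condE avgE normrM normrM normfV (gtr0_norm MQ0).
apply: le_trans H2.
rewrite -[X in (_ <= X)%R]mulr1; apply: ler_wpM2l => //.
by rewrite divr_ge0 // ltW.
Qed.

End Main.

Unset Implicit Arguments.
Local Open Scope ereal_scope.

Theorem mainTheorem7 (R : realType) (n : nat) (n_gt0 : (0 < n)%N)
  (mu : {measure set (Rn R n) -> \bar R})
  (hmu : forall (k : int) (m : 'I_n -> int),
      0 < mu (@dcube R n k m) /\ mu (@dcube R n k m) < +oo)
  (f : Rn R n -> R) (hf : loc_integrable mu f) :
  (forall (k : int) (m : 'I_n -> int),
      \int[mu]_x `|martdiff mu k m f x|%:E
        <= 2%:E * \int[mu]_(x in @dcube R n k m) `|f x|%:E)
  /\
  (forall b : Rn R n -> R, loc_integrable mu b -> bmo_norm mu b < +oo ->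
    forall (k : int) (m : 'I_n -> int) (x : Rn R n),
      `|condE mu (@dcube R n k m)
           (fun y => martdiff mu k m b y * martdiff mu k m f y)%R x|%:E
        <= 2%:E * bmo_norm mu b
           * (avg mu (@dcube R n k m) (fun y => `|f y|%R))%:E).
Proof.
split.
- move=> k m.
  rewrite (@part1 R n mu hmu f k m) (@fin_int R n mu f k m hf) -EFinM lee_fin.
  exact: (@part1_real R n mu hmu f k m hf).
- move=> b hb hB k m x.
  exact: (@part2 R n mu hmu b f k m x hb hB hf).
Qed.
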